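(* Let $m,n,r$ be positive integers. There exists an edge coloring of $\Gamma_{m,n}$ with $r$ colors containing no alternating rectangle if and only if there are edge colorings $c_1,\dots,c_m$ of the complete graph $K_n$, each with $r$ colors, such that $\chi(\mathcal{G}(c_i,c_j))\le r$ for all pairs of indices $i,j$.
   Context: The grid graph $\Gamma_{m,n}$ is the graph on vertex set $[m]\times[n]$ in which distinct vertices $(i,j),(i',j')$ are adjacent iff $i=i'$ or $j=j'$. A rectangle is the induced subgraph on $\{(i,j),(i',j),(i,j'),(i',j')\}$ with $i<i'$, $j<j'$; in an edge coloring it is alternating if $\{(i,j),(i',j)\}$ and $\{(i,j'),(i',j')\}$ have the same color and $\{(i,j),(i,j')\}$ and $\{(i',j),(i',j')\}$ have the same color. For two edge colorings $c_1,c_2$ of $K_n$, $\mathcal{G}(c_1,c_2)$ is the spanning subgraph of $K_n$ consisting of the edges $e$ with $c_1(e)=c_2(e)$; $\chi$ denotes chromatic number. *)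

(* Defs.v *)
From mathcomp Require Import all_boot.
Set Implicit Arguments. Unset Strict Implicit. Unset Printing Implicit Defensive.

(* An edge coloring of a (simple) graph on a finite vertex type V with r colors
   is a map from edges, i.e. 2-element vertex sets [set x; y], to 'I_r.
   We represent it as a function {set V} -> 'I_r; only its values on the
   edges of the graph are ever used. *)
Definition edge_coloring (V : finType) (r : nat) := {set V} -> 'I_r.

Definition colorable (V : finType) (adj : rel V) (k : nat) : bool :=
  [exists f : {ffun V -> 'I_k}, [forall x, forall y, adj x y ==> (f x != f y)]].

Lemma colorable_card (V : finType) (adj : rel V) (irr : irreflexive adj) :
  exists k, colorable adj k.
Proof.
exists #|V|; apply/existsP; exists [ffun x => enum_rank x].
apply/forallP => x; apply/forallP => y; apply/implyP => hxy.
rewrite !ffunE; apply/negP => /eqP /enum_rank_inj exy.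
by move: hxy; rewrite exy irr.
Qed.

Definition agree_graph (n r : nat) (c1 c2 : edge_coloring 'I_n r) : rel 'I_n :=
  fun x y => (x != y) && (c1 [set x; y] == c2 [set x; y]).

Lemma agree_graph_irr n r (c1 c2 : edge_coloring 'I_n r) :
  irreflexive (agree_graph c1 c2).
Proof. by move=> x; rewrite /agree_graph eqxx. Qed.

Definition chromatic_number (V : finType) (adj : rel V)
  (irr : irreflexive adj) : nat := ex_minn (colorable_card irr).

Definition chi_agree n r (c1 c2 : edge_coloring 'I_n r) : nat :=
  chromatic_number (agree_graph_irr c1 c2).

(* Edge colorings of the grid graph Gamma_{m,n} on 'I_m * 'I_n: edges are
   {(i,j),(i',j)} (i<>i') and {(i,j),(i,j')} (j<>j'). *)
Definition alternating_rectangle (m n r : nat) (c : edge_coloring (prod 'I_m 'I_n) r)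
  (i i' : 'I_m) (j j' : 'I_n) : bool :=
  (c [set (i, j); (i', j)] == c [set (i, j'); (i', j')]) &&
  (c [set (i, j); (i, j')] == c [set (i', j); (i', j')]).

Definition no_alternating_rectangle (m n r : nat)
  (c : edge_coloring (prod 'I_m 'I_n) r) : Prop :=
  forall (i i' : 'I_m) (j j' : 'I_n), i < i' -> j < j' ->
    ~~ alternating_rectangle c i i' j j'.

(* Main.v *)
Require Import Defs.
From mathcomp Require Import all_boot.
From mathcomp Require Import zify.
Set Implicit Arguments. Unset Strict Implicit. Unset Printing Implicit Defensive.

Lemma set2_img (A B : finType) (f : A -> B) a b : f @: [set a; b] = [set f a; f b].
Proof. by rewrite imsetU1 imset_set1. Qed.

Lemma no_alt_sym m n r (c : edge_coloring (prod 'I_m 'I_n) r) :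
  no_alternating_rectangle c -> forall i i' j j', i != i' -> j != j' ->
  c [set (i,j);(i',j)] = c [set (i,j');(i',j')] ->
  c [set (i,j);(i,j')] = c [set (i',j);(i',j')] -> False.
Proof.
move=> hc i i' j j' hi hj.
wlog lti : i i' hi / i < i'.
  move=> H; case: (ltngtP i i') => h; first exact: H.
  - move=> e1 e2; apply: (H i' i) => //; first by rewrite eq_sym.
    all: try by rewrite setUC e1 setUC.
    all: try by rewrite e2.
  - by move: hi; rewrite (val_inj h) eqxx.
wlog ltj : j j' hj / j < j'.
  move=> H; case: (ltngtP j j') => h; first exact: H.
  - move=> e1 e2; apply: (H j' j) => //; first by rewrite eq_sym.
    all: try by rewrite e1.
    all: try by rewrite setUC e2 setUC.
  - by move: hj; rewrite (val_inj h) eqxx.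
move=> e1 e2; move: (hc i i' j j' lti ltj).
by rewrite /alternating_rectangle e1 e2 !eqxx.
Qed.

Lemma colorable_le (V : finType) (adj : rel V) k k' : k <= k' -> colorable adj k -> colorable adj k'.
Proof.
move=> hk /existsP [f /forallP hf]; apply/existsP.
exists [ffun x => widen_ord hk (f x)].
apply/forallP => x; apply/forallP => y; apply/implyP => hxy.
rewrite !ffunE; have := hf x => /forallP /(_ y) /implyP /(_ hxy).
by apply: contra => /eqP [] e; apply/eqP/val_inj.
Qed.

Lemma chi_le n r (c1 c2 : edge_coloring 'I_n r) :
  colorable (agree_graph c1 c2) r -> chi_agree c1 c2 <= r.
Proof.
move=> h; rewrite /chi_agree /chromatic_number.
by case: ex_minnP => k _ /(_ r h).
Qed.

Lemma chi_col n r (c1 c2 : edge_coloring 'I_n r) :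
  chi_agree c1 c2 <= r -> colorable (agree_graph c1 c2) r.
Proof.
rewrite /chi_agree /chromatic_number.
case: ex_minnP => k hk _ hkr; exact: colorable_le hkr hk.
Qed.

Lemma set2_ord m (a b c d : 'I_m) : a < b -> c < d -> [set a; b] = [set c; d] ->
  a = c /\ b = d.
Proof.
move=> hab hcd e.
have ha : a \in [set c; d] by rewrite -e !inE eqxx ?orbT.
have hb : b \in [set c; d] by rewrite -e !inE eqxx ?orbT.
have hc : c \in [set a; b] by rewrite e !inE eqxx ?orbT.
have hd : d \in [set a; b] by rewrite e !inE eqxx ?orbT.
move: ha hb hc hd; rewrite !inE.
case/orP=> /eqP ha; case/orP=> /eqP hb; case/orP=> /eqP hc; case/orP=> /eqP hd;
  subst; try by split.
all: try (exfalso; move: hab hcd; rewrite ?ltnn; lia).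
Qed.

Theorem lemma3p1 (m n r : nat) (hm : 0 < m) (hn : 0 < n) (hr : 0 < r) :
  (exists c : edge_coloring (prod 'I_m 'I_n) r, no_alternating_rectangle c) <->
  (exists cs : 'I_m -> edge_coloring 'I_n r,
     forall i j : 'I_m, i != j -> chi_agree (cs i) (cs j) <= r).
Proof.
split.
  case=> c hc.
  exists (fun i (S : {set 'I_n}) => c [set (i, x) | x in S]) => i i' hi.
  apply: chi_le; apply/existsP; exists [ffun j => c [set (i,j);(i',j)]].
  apply/forallP => j; apply/forallP => j'; apply/implyP.
  rewrite /agree_graph !set2_img => /andP [hj /eqP e].
  rewrite !ffunE; apply/negP => /eqP e'.
  exact: (no_alt_sym hc hi hj e' e).
case=> cs hcs.
pose d0 := Ordinal hr.
pose proper (i i' : 'I_m) (f : {ffun 'I_n -> 'I_r}) :=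
  [forall x, forall y, agree_graph (cs i) (cs i') x y ==> (f x != f y)].
pose F i i' := odflt [ffun=> d0] [pick f | proper i i' f].
have FP : forall i i', i != i' -> proper i i' (F i i').
  move=> i i' hi; rewrite /F; case: pickP => [f hf //|].
  by move=> h0; case/existsP: (chi_col (hcs _ _ hi)) => f hf; have := h0 f; rewrite /proper hf.
pose col (T : {set 'I_m}) (j : 'I_n) :=
  if [pick q : 'I_m * 'I_m | (q.1 < q.2) && (T == [set q.1; q.2])] is Some q
  then F q.1 q.2 j else d0.
pose c (S : {set 'I_m * 'I_n}) :=
  if [pick x in S] is Some x then
    (if [forall y in S, y.1 == x.1] then cs x.1 [set y.2 | y in S]
     else col [set y.1 | y in S] x.2) else d0.
have crow : forall (i : 'I_m) (j j' : 'I_n), c [set (i,j);(i,j')] = cs i [set j; j'].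
  move=> i j j'; rewrite /c; case: pickP => [x hx|]; last first.
    by move/(_ (i,j)); rewrite !inE eqxx ?orbT.
  have -> : x.1 = i by move: hx; rewrite !inE => /orP [] /eqP ->.
  have -> : [forall y in [set (i,j);(i,j')], y.1 == i].
    by apply/forall_inP => y; rewrite !inE => /orP [] /eqP ->.
  by rewrite set2_img.
have ccol : forall (i i' : 'I_m) (j : 'I_n), i < i' -> c [set (i,j);(i',j)] = F i i' j.
  move=> i i' j lt; rewrite /c; case: pickP => [x hx|]; last first.
    by move/(_ (i,j)); rewrite !inE eqxx ?orbT.
  have -> : x.2 = j by move: hx; rewrite !inE => /orP [] /eqP ->.
  have -> : [forall y in [set (i,j);(i',j)], y.1 == x.1] = false.
    apply/negbTE/negP => /forall_inP h.
    have h1 := h (i,j); have h2 := h (i',j).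
    rewrite !inE !eqxx ?orbT /= in h1 h2; have := h1 isT; have := h2 isT.
    move=> /eqP <- /eqP e; move: lt; rewrite e ltnn //.
  rewrite set2_img /= /col; case: pickP => [q /andP [hq /eqP e]|]; last first.
    by move/(_ (i,i')); rewrite /= lt eqxx.
  by have [<- <-] := set2_ord lt hq e.
exists c => i i' j j' lti ltj.
rewrite /alternating_rectangle !crow !ccol //.
apply/negP => /andP [/eqP e1 /eqP e2].
have hi : i != i' by rewrite neq_ltn lti.
have := FP i i' hi => /forallP /(_ j) /forallP /(_ j') /implyP.
rewrite /agree_graph e2 eqxx neq_ltn ltj /= => /(_ isT).
by rewrite e1 eqxx.
Qed.
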